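(* Let $\mathfrak{g}$ be a finite-dimensional Lie algebra over a field $K$ of characteristic zero with trivial center. Then every weakly inner CPA-structure on $\mathfrak{g}$ is inner.
   Context: A CPA-structure on $\mathfrak{g}$ is a bilinear product $x\cdot y$ satisfying, for all $x,y,z$: $x\cdot y=y\cdot x$; $[x,y]\cdot z=x\cdot(y\cdot z)-y\cdot(x\cdot z)$; $x\cdot[y,z]=[x\cdot y,z]+[y,x\cdot z]$. It is weakly inner if there is a linear map $\phi\in\mathrm{End}(V)$ of the underlying vector space with $x\cdot y=[\phi(x),y]$ for all $x,y$; it is inner if moreover $\phi$ can be taken to be a Lie algebra homomorphism $\mathfrak{g}\to\mathfrak{g}$. *)

(* Defs.v *)
From HB Require Import structures.
From mathcomp Require Import all_boot all_algebra.
Set Implicit Arguments. Unset Strict Implicit. Unset Printing Implicit Defensive.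
Import GRing.Theory.
Local Open Scope ring_scope.

Record lie_algebra (K : fieldType) (V : vectType K) (br : V -> V -> V) : Prop := {
  lie_linl : forall z (a : K) x y, br (a *: x + y) z = a *: br x z + br y z;
  lie_linr : forall z (a : K) x y, br z (a *: x + y) = a *: br z x + br z y;
  lie_alt : forall x, br x x = 0;
  lie_jacobi : forall x y z, br x (br y z) + br y (br z x) + br z (br x y) = 0 }.

Definition center_trivial (K : fieldType) (V : vectType K) (br : V -> V -> V) :=
  forall z : V, (forall x, br z x = 0) -> z = 0.

Record CPA_structure (K : fieldType) (V : vectType K) (br : V -> V -> V)
    (dot : V -> V -> V) : Prop := {
  cpa_linl : forall z (a : K) x y, dot (a *: x + y) z = a *: dot x z + dot y z;
  cpa_linr : forall z (a : K) x y, dot z (a *: x + y) = a *: dot z x + dot z y;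
  cpa_comm : forall x y, dot x y = dot y x;
  cpa_der1 : forall x y z, dot (br x y) z = dot x (dot y z) - dot y (dot x z);
  cpa_der2 : forall x y z, dot x (br y z) = br (dot x y) z + br y (dot x z) }.

Definition weakly_inner (K : fieldType) (V : vectType K) (br : V -> V -> V)
    (dot : V -> V -> V) :=
  exists phi : 'End(V), forall x y, dot x y = br (phi x) y.

Definition inner (K : fieldType) (V : vectType K) (br : V -> V -> V)
    (dot : V -> V -> V) :=
  exists phi : 'End(V),
    (forall x y, phi (br x y) = br (phi x) (phi y)) /\
    (forall x y, dot x y = br (phi x) y).

(* Main.v *)
Require Import Defs.
From HB Require Import structures.
From mathcomp Require Import all_boot all_algebra.
Import GRing.Theory.
Local Open Scope ring_scope.

Theorem lemma2p8 (K : fieldType) (V : vectType K) (br : V -> V -> V) :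
  [pchar K] =i pred0 ->
  lie_algebra br ->
  center_trivial br ->
  forall dot : V -> V -> V,
    CPA_structure br dot -> weakly_inner br dot -> inner br dot.
Proof.
move=> _ [linl linr alt jac] ctr dot [_ _ _ der1 _] [phi Hphi].
exists phi; split=> // x y.
have addl : forall u v z, br (u + v) z = br u z + br v z.
  by move=> u v z; have := linl z 1 u v; rewrite !scale1r.
have addr : forall u v z, br z (u + v) = br z u + br z v.
  by move=> u v z; have := linr z 1 u v; rewrite !scale1r.
have l0 : forall z, br 0 z = 0.
  move=> z; apply/eqP; have := addl 0 0 z; rewrite addr0.
  by move/(congr1 (fun t => t - br 0 z)); rewrite subrr addrK => <-.
have r0 : forall z, br z 0 = 0.
  move=> z; apply/eqP; have := addr 0 0 z; rewrite addr0.
  by move/(congr1 (fun t => t - br z 0)); rewrite subrr addrK => <-.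
have oppl : forall u z, br (- u) z = - br u z.
  move=> u z; apply/eqP; rewrite -addr_eq0 addrC -addl subrr l0 //.
have oppr : forall u z, br z (- u) = - br z u.
  move=> u z; apply/eqP; rewrite -addr_eq0 addrC -addr subrr r0 //.
have anti : forall u v, br u v = - br v u.
  move=> u v; apply/eqP; rewrite -addr_eq0.
  have := alt (u + v); rewrite addl !addr !alt add0r addr0 => ->.
  by [].
set u := phi (br x y) - br (phi x) (phi y).
suff : u = 0 by move/eqP; rewrite subr_eq0 => /eqP.
apply: ctr => z.
rewrite /u addl oppl -Hphi der1 !Hphi.
have := jac (phi x) (phi y) z.
rewrite (anti z (phi x)) (anti z (br (phi x) (phi y))) oppr.
by [].
Qed.
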